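(* Let $G$ be a compact abelian group with Haar probability $m_G$, $d$ a translation-invariant metric on $G$, and $T_gx=x+g$ an ergodic rotation. The graph joinings $\lambda_h=(x\mapsto(x,x+h))_\#m_G$, $h\in G$, all lie in one coordinate-isomorphism class, and $\Phi_{n,m}(\lambda_h)=\Phi_{n,m}(\lambda_{h'})$ for all $h,h'\in G$ and all $n,m\ge1$. Moreover, if $d(X_1,X_2)$ is non-degenerate (not a.s. constant) for independent Haar-distributed $X_1,X_2$, then $\Phi_{2,1}(\lambda_h)\ne\Phi_{2,1}(m_G\otimes m_G)$.
   Context: For $z_i=(x_i,y_i)\in G\times G$, $\mathcal D^X_{n,m}=(d(T_g^ax_i,T_g^bx_j))_{1\le i,j\le n,0\le a,b<m}$, $\mathcal D^Y_{n,m}=(d(T_g^ay_i,T_g^by_j))_{1\le i,j\le n,0\le a,b<m}$, $\Phi_{n,m}(\lambda)=\mathrm{Law}_{\lambda^{\otimes n}}(\mathcal D^X_{n,m},\mathcal D^Y_{n,m})$. $\mathrm{Aut}_{\rm md}$ of $(G,d,m_G,T_g)$ is the group of measure-space automorphisms $A$ of $(G,m_G)$ commuting with $T_g$ modulo null sets and with $d(Ax,Ax')=d(x,x')$ for $m_G\otimes m_G$-a.e. $(x,x')$. Two self-joinings $\lambda,\lambda'$ are coordinate-isomorphic if $\lambda'=(A\times B)_\#\lambda$ for some $A,B\in\mathrm{Aut}_{\rm md}$. *)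

(* Defs.v *)
From HB Require Import structures.
From mathcomp Require Import all_boot all_order all_algebra.
From mathcomp Require Import all_classical all_reals all_analysis.
Set Implicit Arguments. Unset Strict Implicit. Unset Printing Implicit Defensive.
Import Order.TTheory GRing.Theory Num.Theory.
Local Open Scope classical_set_scope.
Local Open Scope ring_scope.

Definition is_metric {R : realType} {T : Type} (d : T -> T -> R) :=
  [/\ (forall x y, 0 <= d x y),
      (forall x y, d x y = 0 <-> x = y),
      (forall x y, d x y = d y x) &
      (forall x y z, d x z <= d x y + d y z)].

Definition induces_topology {R : realType} {T : topologicalType} (d : T -> T -> R) :=
  forall (x : T) (U : set T),
    nbhs x U <-> exists2 e : R, 0 < e & [set y | d x y < e] `<=` U.

(* G made pointed (at 0), so as to carry the generated sigma-algebra *)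
Definition pG (G : topologicalZmodType) : Type := G.
HB.instance Definition _ (G : topologicalZmodType) := Choice.on (pG G).
HB.instance Definition _ (G : topologicalZmodType) := isPointed.Build (pG G) (0 : G).
Notation BorelG G := (g_sigma_algebraType (@open G : set (set (pG G)))).

Section defs.
Context {R : realType} {G : topologicalZmodType}.
Local Notation BorelG := (BorelG G).

Definition haar (m : set BorelG -> \bar R) :=
  forall (g : G) (A : set BorelG), measurable A ->
    m ((fun x : G => x + g) @^-1` A) = m A.

Definition ergodic (m : set BorelG -> \bar R) (T : G -> G) :=
  forall A : set BorelG, measurable A -> T @^-1` A = A ->
    m A = 0%E \/ m A = 1%E.

Definition graph_joining (m : set BorelG -> \bar R) (h : G) :
    set (BorelG * BorelG)%type -> \bar R :=
  fun E => m ((fun x : G => (x, x + h)) @^-1` E).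

Definition selfjoining (m : set BorelG -> \bar R) (g : G)
   (lam : set (BorelG * BorelG)%type -> \bar R) :=
  [/\ lam setT = 1%E,
      (forall A : set BorelG, measurable A -> lam (A `*` setT) = m A),
      (forall A : set BorelG, measurable A -> lam (setT `*` A) = m A) &
      (forall E : set (BorelG * BorelG)%type, measurable E ->
        lam ((fun p : G * G => (p.1 + g, p.2 + g)) @^-1` E) = lam E)].

Definition Aut_md (m : set BorelG -> \bar R) (d : G -> G -> R) (g : G) (A : G -> G) :=
  exists B : G -> G,
  measurable_fun (setT : set BorelG) (A : BorelG -> BorelG) /\
  measurable_fun (setT : set BorelG) (B : BorelG -> BorelG) /\
  (forall E : set BorelG, measurable E -> m (A @^-1` E) = m E) /\
  (forall E : set BorelG, measurable E -> m (B @^-1` E) = m E) /\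
  {ae m, forall x : BorelG, B (A x) = x} /\
  {ae m, forall x : BorelG, A (B x) = x} /\
  {ae m, forall x : BorelG, A (x + g) = A x + g} /\
  {ae (m \x m)%E, forall p : (BorelG * BorelG)%type,
      d (A p.1) (A p.2) = d p.1 p.2}.

Definition coord_iso (m : set BorelG -> \bar R) (d : G -> G -> R) (g : G)
   (lam lam' : set (BorelG * BorelG)%type -> \bar R) :=
  exists A B : G -> G, [/\ Aut_md m d g A, Aut_md m d g B &
    (forall E : set (BorelG * BorelG)%type, measurable E ->
      lam' E = lam ((fun p : G * G => (A p.1, B p.2)) @^-1` E))].

End defs.

(* n-fold product measure lam^{\otimes n} evaluated by iterated integration
   over sequences (z_1, ..., z_n) of length n *)
Fixpoint iprod d (T : measurableType d) (R : realType) (lam : set T -> \bar R)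
    (n : nat) (F : seq T -> \bar R) : \bar R :=
  match n with
  | 0 => F [::]
  | n'.+1 => (\int[lam]_z iprod lam n' (fun s => F (z :: s)))%E
  end.

Arguments iprod {d T R} lam n F.

Definition prodn d (T : measurableType d) (R : realType) (lam : set T -> \bar R)
    (n : nat) (A : set (seq T)) : \bar R :=
  iprod lam n (fun s => (\1_A s)%:E).

Arguments prodn {d T R} lam n A.

(* index set {1..n} x {0..m-1} *)
Definition Idx (n m : nat) := ('I_n * 'I_m)%type.
Definition Cod (R : realType) (n m : nat) :=
  ((Idx n m * Idx n m -> R) * (Idx n m * Idx n m -> R))%type.

(* Borel sigma-algebra of the (finite-dimensional) codomain: generated by
   coordinate preimages of Borel sets of R *)
Definition cod_cyl (R : realType) (n m : nat) : set (set (Cod R n m)) :=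
  [set E | exists (k : Idx n m * Idx n m) (B : set R), measurable B /\
     (E = [set P | B (P.1 k)] \/ E = [set P | B (P.2 k)])].

Definition cod_measurable (R : realType) (n m : nat) : set (set (Cod R n m)) :=
  <<s (@cod_cyl R n m) >>.

(* the pair (D^X_{n,m}, D^Y_{n,m}) computed from z = (z_1,...,z_n) *)
Definition dmats {R : realType} {G : topologicalZmodType} (d : G -> G -> R) (g : G) (n m : nat)
    (s : seq (G * G)) : Cod R n m :=
  ((fun ij : Idx n m * Idx n m =>
      d ((nth (0, 0) s ij.1.1).1 + g *+ ij.1.2)
            ((nth (0, 0) s ij.2.1).1 + g *+ ij.2.2)),
   (fun ij : Idx n m * Idx n m =>
      d ((nth (0, 0) s ij.1.1).2 + g *+ ij.1.2)
            ((nth (0, 0) s ij.2.1).2 + g *+ ij.2.2))).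

Arguments dmats {R G} d g n m s.

Definition Phi {R : realType} {G : topologicalZmodType} (d : G -> G -> R) (g : G) (n m : nat)
    (lam : set (BorelG G * BorelG G)%type -> \bar R) : set (Cod R n m) -> \bar R :=
  fun B => prodn lam n (dmats d g n m @^-1` B).

Arguments Phi {R G} d g n m lam _.

Definition Phi_eq {R : realType} {G : topologicalZmodType} (d : G -> G -> R) (g : G) (n m : nat)
    (lam lam' : set (BorelG G * BorelG G)%type -> \bar R) :=
  forall B : set (Cod R n m), @cod_measurable R n m B -> Phi d g n m lam B = Phi d g n m lam' B.
Arguments Phi_eq {R G} d g n m lam lam'.

(* Main.v *)
Require Import Defs.
From HB Require Import structures.
From mathcomp Require Import all_boot all_order all_algebra.
From mathcomp Require Import all_classical all_reals all_analysis.
From mathcomp Require Import lra measurable_realfun.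
Import Order.TTheory GRing.Theory Num.Theory.
Import numFieldNormedType.Exports.
Local Open Scope classical_set_scope.
Local Open Scope ring_scope.
Section comp_nnsfun.
Context d1 d2 (X : measurableType d1) (Y : measurableType d2) (R : realType).
Variables (phi : X -> Y) (mphi : measurable_fun setT phi).
Import HBNNSimple.
Variable h : {nnsfun Y >-> R}.
Definition hcomp := fun x => h (phi x).
Lemma hcomp_meas : measurable_fun setT hcomp.
Proof. exact: measurableT_comp. Qed.
HB.instance Definition _ := isMeasurableFun.Build _ _ _ _ hcomp hcomp_meas.
Lemma hcomp_fin : finite_set (range hcomp).
Proof.
apply: (sub_finite_set _ (fimfunP h)).
by move=> _ [x _ <-]; exists (phi x).
Qed.
HB.instance Definition _ := FiniteImage.Build _ _ hcomp hcomp_fin.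
Lemma hcomp_ge0 : forall x, 0 <= hcomp x.
Proof. by move=> x; exact: fun_ge0. Qed.
HB.instance Definition _ := isNonNegFun.Build _ _ hcomp hcomp_ge0.
Definition hcomp_nnsfun : {nnsfun X >-> R} := hcomp.
End comp_nnsfun.

Section push.
Local Open Scope ereal_scope.
Context d1 d2 (X : measurableType d1) (Y : measurableType d2) (R : realType).
Variables (mu : {measure set X -> \bar R}) (phi : X -> Y) (mphi : measurable_fun setT phi).
Import HBNNSimple.

Lemma le_int_push (f : Y -> \bar R) : (forall y, 0 <= f y) ->
  \int[pushforward mu phi]_y f y <= \int[mu]_x f (phi x).
Proof.
move=> f0.
rewrite ge0_integralTE // ge0_integralTE //.
apply: ge_ereal_sup => _ [h hf <-].
apply: ereal_sup_ubound; exists (@hcomp_nnsfun _ _ _ _ _ _ mphi h) => //.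
by move=> x; exact: hf.
Qed.
End push.
Arguments le_int_push {d1 d2 X Y R} mu {phi} mphi f.

Definition pmeas d1 d2 (X : measurableType d1) (Y : measurableType d2) (R : realType)
  (mu : {measure set X -> \bar R}) (phi : X -> Y) (mphi : measurable_fun setT phi) :
  {measure set Y -> \bar R} :=
  measure_function_pushforward__canonical__measure_function_Measure mu mphi.

Arguments pmeas {d1 d2 X Y R} mu {phi} mphi.

Section pushbij.
Local Open Scope ereal_scope.
Context d1 (X : measurableType d1) (R : realType).
Variables (mu : {measure set X -> \bar R}) (phi psi : X -> X).
Hypotheses (mphi : measurable_fun setT phi) (mpsi : measurable_fun setT psi)
  (phiK : cancel phi psi) (psiK : cancel psi phi).

Lemma int_push_bij (f : X -> \bar R) : (forall y, 0 <= f y) ->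
  \int[pushforward mu phi]_y f y = \int[mu]_x f (phi x).
Proof.
move=> f0; apply/eqP; rewrite eq_le; apply/andP; split.
  exact: le_int_push.
have E : pushforward (pushforward mu phi) psi = mu.
  apply/funext => A; rewrite /pushforward; congr (mu _).
  by apply/funext => x /=; rewrite phiK.
have -> : \int[mu]_x f (phi x) = \int[pushforward (pushforward mu phi) psi]_x f (phi x).
  by rewrite E.
have H := le_int_push (pmeas mu mphi) mpsi (fun x => f (phi x)) (fun x => f0 _).
apply: (le_trans H) => /=.
by under eq_integral do rewrite psiK.
Qed.
End pushbij.

Arguments int_push_bij {d1 X R} mu {phi psi} mphi mpsi phiK psiK f.

Section iprod_lemmas.
Local Open Scope ereal_scope.
Context d1 (X : measurableType d1) (R : realType).

Lemma iprod_ge0 (mu : {measure set X -> \bar R}) n F :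
  (forall s, 0 <= F s) -> 0 <= iprod mu n F.
Proof.
elim: n F => [|n IH] F F0 //=.
by apply: integral_ge0 => z _; apply: IH.
Qed.

Lemma iprod_ext (mu : set X -> \bar R) n F F' :
  (forall s, size s = n -> F s = F' s) -> iprod mu n F = iprod mu n F'.
Proof.
elim: n F F' => [|n IH] F F' FF' /=; first exact: FF'.
congr (integral _ _ _); apply/funext => z; apply: IH => s Hs.
by apply: FF'; rewrite /= Hs.
Qed.

Lemma iprod_push (mu : {measure set X -> \bar R}) (phi psi : X -> X)
  (mphi : measurable_fun setT phi) (mpsi : measurable_fun setT psi)
  (phiK : cancel phi psi) (psiK : cancel psi phi) n F :
  (forall s, 0 <= F s) ->
  iprod (pushforward mu phi) n F = iprod mu n (fun s => F (map phi s)).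
Proof.
elim: n F => [|n IH] F F0 //=.
transitivity (\int[pushforward mu phi]_z iprod mu n (fun s => F (z :: map phi s))).
  by congr (integral _ _ _); apply/funext => z; apply: IH.
rewrite (int_push_bij mu mphi mpsi phiK psiK) //.
by move=> z; apply: iprod_ge0.
Qed.
End iprod_lemmas.

Definition pGT (G : topologicalZmodType) : Type := G.
HB.instance Definition _ (G : topologicalZmodType) := Topological.copy (pGT G) G.
HB.instance Definition _ (G : topologicalZmodType) := isPointed.Build (pGT G) (0 : G).

Section geo.
Context (R : realType) (G : topologicalZmodType) (d : G -> G -> R)
  (d_metric : is_metric d) (d_top : induces_topology d)
  (d_inv : forall x y z : G, d (x + z) (y + z) = d x y)
  (G_compact : compact [set: G]).
Local Notation BG := (BorelG G).

Lemma d_ge0 x y : 0 <= d x y. Proof. by case: d_metric. Qed.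
Lemma d_sym x y : d x y = d y x. Proof. by case: d_metric. Qed.
Lemma d_tri x y z : d x z <= d x y + d y z. Proof. by case: d_metric. Qed.
Lemma d_xx x : d x x = 0. Proof. by case: d_metric => _ H _ _; apply/H. Qed.

Lemma open_meas (U : set G) : open U -> measurable (U : set BG).
Proof. by move=> oU; apply: sub_sigma_algebra. Qed.

Lemma nbhs_d x e : 0 < e -> nbhs x [set y | d x y < e].
Proof. by move=> e0; apply/d_top; exists e. Qed.

Lemma d_cont a : continuous (fun y : G => d a y).
Proof.
move=> x; apply/cvgrPdist_lt => e e0.
near=> y; have dxy : d x y < e by near: y; exact: nbhs_d.
rewrite ltr_norml; apply/andP; split.
- have := d_tri a x y; lra.
- have := d_tri a y x; rewrite (d_sym y x); lra.
Unshelve. all: by end_near.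
Qed.

Lemma d_meas a : measurable_fun setT (fun y : BG => d a y).
Proof.
apply: (@measurability _ _ BG R setT (fun y => d a y) _ (RGenOpens.measurableE R)).
move=> _ [_ [x [y ->]] <-].
apply: sub_sigma_algebra; rewrite setTI.
apply: ((continuousP _).1 (d_cont a)).
exact: interval_open.
Qed.

Lemma trans_cont h : continuous (fun x : G => x + h).
Proof.
move=> x U /d_top [e e0 sU]; apply/d_top; exists e => // y /= dxy.
by apply: sU; rewrite /= d_inv.
Qed.

Lemma trans_meas h : measurable_fun setT (fun x : BG => (x + h : BG)).
Proof.
apply: (@measurability _ _ BG BG setT (fun x : BG => (x + h : BG)) (@open G) erefl).
move=> _ [U oU <-]; apply: sub_sigma_algebra; rewrite setTI.
exact: ((continuousP _).1 (trans_cont h)).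
Qed.


Lemma ballG_open a e : open [set y : G | d a y < e].
Proof. by have := (continuousP _).1 (d_cont a) _ (@open_lt R e). Qed.

Lemma ballG_meas a e : measurable ([set y : G | d a y < e] : set BG).
Proof. by apply: open_meas; apply: ballG_open. Qed.


Lemma finite_nets : exists s : nat -> seq G, forall n x,
  exists2 a, a \in s n & d a x < n.+1%:R^-1.
Proof.
suff /choice [s Hs] : forall n : nat, exists s : seq G, forall x,
  exists2 a, a \in s & d a x < n.+1%:R^-1 by exists s.
move=> n.
have cc : cover_compact [set: pGT G].
  by rewrite -compact_cover.
move: cc => /(_ G setT (fun a => [set y : G | d a y < n.+1%:R^-1])).
case.
- by move=> a _; exact: ballG_open.
- by move=> x _; exists x => //=; rewrite d_xx.
move=> D' _ cov; exists (finmap.enum_fset D') => x.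
have [a aD' dax] := cov x I.
by exists a.
Qed.

Lemma d_meas2 : measurable_fun setT (fun p : BG * BG => d p.1 p.2).
Proof.
have [s Hs] := finite_nets.
apply: (@measurability _ _ (BG * BG)%type R setT (fun p : BG * BG => d p.1 p.2) _ (RGenInftyO.measurableE R)).
move=> _ [_ [r ->] <-]; rewrite setTI.
have -> : (fun p : BG * BG => d p.1 p.2) @^-1` `]-oo, r[ =
   \bigcup_n \big[setU/set0]_(a <- s n)
      ([set x : BG | d a x < n.+1%:R^-1] `*` [set y : BG | d a y < r - n.+1%:R^-1]).
  apply/seteqP; split.
  - move=> [x y] /=; rewrite in_itv /= => dxy.
    have hpos : 0 < (r - d x y) / 2.
      by rewrite divr_gt0 // subr_gt0.
    have [k Hk] := @ltr_add_invr R 0 ((r - d x y) / 2) hpos.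
    rewrite add0r in Hk.
    exists k => //; rewrite -bigcup_seq.
    have [a ain dax] := Hs k x.
    exists a => //=; split => //.
    have := d_tri a x y; move: dax Hk dxy.
    move: (k.+1%:R^-1) (d a x) (d a y) (d x y) => e u v w; lra.
  - move=> [x y] [n _]; rewrite -bigcup_seq => -[a _ [/= dax day]].
    rewrite /= in_itv /=.
    have := d_tri x a y; rewrite (d_sym x a); move: dax day.
    move: (n.+1%:R^-1) (d a x) (d a y) (d x y) => e u v w; lra.
apply: bigcupT_measurable => n; apply: bigsetU_measurable => a _.
by apply: measurableX; apply: ballG_meas.
Qed.

Variable mG : probability BG R.
Hypothesis mG_haar : haar mG.
Variable g : G.

Lemma dpre_meas x (A : set R) : measurable A -> measurable ([set w : BG | A (d x w)]).
Proof. by move=> mA; have := d_meas x measurableT _ mA; rewrite setTI. Qed.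

Lemma haar_d x (A : set R) : measurable A ->
  mG [set w : BG | A (d x w)] = mG [set w : BG | A (d 0 w)].
Proof.
move=> mA.
have -> : [set w : BG | A (d x w)] =
    (fun w : G => w + (- x)) @^-1` [set w : BG | A (d 0 w)].
  apply/seteqP; split => w /=.
  - by rewrite -(subrr x) d_inv.
  - by rewrite -(subrr x) d_inv.
by rewrite mG_haar //; exact: dpre_meas.
Qed.

Definition p0 (A : set R) := mG [set w : BG | A (d 0 w)].

Lemma ae_const (c : R) : mG [set w : BG | (~` [set c]) (d 0 w)] = 0%E ->
  {ae (mG \x mG)%E, forall p : (BG * BG)%type, d p.1 p.2 = c}.
Proof.
move=> H0.
exists [set p : BG * BG | (~` [set c]) (d p.1 p.2)]; split.
- have := d_meas2 measurableT _ (measurableC (measurable_set1 c)).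
  by rewrite setTI.
- rewrite /product_measure1 /=.
  apply: integral0_eq => x _ /=.
  have -> : xsection [set p : BG * BG | (~` [set c]) (d p.1 p.2)] x =
      [set w : BG | (~` [set c]) (d x w)].
    by apply/seteqP; split => w; rewrite /xsection /= inE.
  by rewrite haar_d //; exact: measurableC (measurable_set1 c).
- by move=> p /= H; exact: H.
Qed.
Lemma p0_meas (A : set R) : measurable A -> measurable [set w : BG | A (d 0 w)].
Proof. exact: dpre_meas. Qed.

Lemma negl_p0 (A : set R) : measurable A -> p0 A = 0%E ->
  mG.-negligible [set w : BG | A (d 0 w)].
Proof. by move=> mA H; apply/negligibleP => //; exact: p0_meas. Qed.

Lemma zero_one_const : (forall A, measurable A -> p0 A = 0%E \/ p0 (~` A) = 0%E) ->
  exists c, p0 (~` [set c]) = 0%E.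
Proof.
move=> H01.
pose S := [set t : R | p0 `]-oo, t[%classic = 0%E].
have S0 : S 0.
  rewrite /S /p0 /=.
  have -> : [set w : BG | (`]-oo, 0[%classic) (d 0 w)] = set0.
    apply/seteqP; split => w //=; rewrite in_itv /= => H.
    by have := d_ge0 0 w; rewrite leNgt H.
  exact: measure0.
have Sdown : forall t t', t' <= t -> S t -> S t'.
  move=> t t' tt' St; apply/eqP; rewrite eq_le measure_ge0 andbT -St /p0.
  apply: le_measure; rewrite ?inE; [exact: p0_meas|exact: p0_meas|].
  move=> w /=; rewrite !in_itv /= => H; exact: lt_le_trans H tt'.
have Snat : (forall n : nat, S n%:R) -> False.
  move=> Sn.
  have : mG.-negligible (\bigcup_n [set w : BG | (`]-oo, n%:R[%classic) (d 0 w)]).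
    by apply: negligible_bigcup => n; apply: negl_p0 => //; exact: Sn.
  have -> : \bigcup_n [set w : BG | (`]-oo, n%:R[%classic) (d 0 w)] = setT.
    apply/seteqP; split => // w _.
    exists (Num.bound (d 0 w)) => //=; rewrite in_itv /=.
    by apply: archi_boundP; exact: d_ge0.
  move/negligibleP => /(_ measurableT).
  move=> H0; have H1 : mG [set: BG] = 0%E := H0.
  by move: H1; rewrite (probability_setT mG) => /eqP; rewrite onee_eq0.
have Sub : exists M, forall t, S t -> t <= M.
  case: (pselect (exists n : nat, ~ S n%:R)) => [[n nS]|nex].
    exists n%:R => t St; rewrite leNgt; apply/negP => nt.
    by apply: nS; apply: (Sdown t) => //; exact: ltW.
  exfalso; apply: Snat => n.
  by apply: contrapT => nS; apply: nex; exists n.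
have hS : has_sup S.
  split; first by exists 0.
  by case: Sub => M HM; exists M => t St; exact: HM.
pose c := sup S.
exists c.
have e_pos : forall n : nat, 0 < n.+1%:R^-1 :> R by [].
have neg1 : mG.-negligible [set w : BG | (`]-oo, c[%classic) (d 0 w)].
  have HN : mG.-negligible (\bigcup_n [set w : BG | (`]-oo, c - n.+1%:R^-1[%classic) (d 0 w)]).
    apply: negligible_bigcup => n; apply: negl_p0 => //.
    have [t St Ht] := sup_adherent (e_pos n) hS.
    by apply: (Sdown t) => //; exact: ltW.
  apply: (negligibleS _ HN).
    move=> w /=; rewrite in_itv /= => H.
    have [k Hk] := @ltr_add_invr R 0 (c - d 0 w) ltac:(by rewrite subr_gt0).
    rewrite add0r in Hk.
    exists k => //=; rewrite in_itv /=.
    move: Hk; move: (k.+1%:R^-1) (d 0 w) => e u; lra.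
have neg2 : mG.-negligible [set w : BG | (`]c, +oo[%classic) (d 0 w)].
  have HN : mG.-negligible (\bigcup_n [set w : BG | (~` `]-oo, c + n.+1%:R^-1[%classic) (d 0 w)]).
    apply: negligible_bigcup => n.

  have mI : measurable (`]-oo, c + n.+1%:R^-1[%classic : set R) by [].
  case: (H01 _ mI) => Hn.
    have : S (c + n.+1%:R^-1) by [].
    move/(sup_upper_bound hS); rewrite -/c => H.
    by have := e_pos n; move: H; move: (n.+1%:R^-1) => e; lra.
  apply: negl_p0 => //; exact: measurableC.
  apply: (negligibleS _ HN).
    move=> w /=; rewrite in_itv /= andbT => H.
    have [k Hk] := @ltr_add_invr R 0 (d 0 w - c) ltac:(by rewrite subr_gt0).
    rewrite add0r in Hk.
    exists k => //=; rewrite in_itv /= => H2.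
    move: Hk H2; move: (k.+1%:R^-1) (d 0 w) => e u; lra.
have : mG.-negligible [set w : BG | (~` [set c]) (d 0 w)].
  apply: (negligibleS _ (negligibleU neg1 neg2)).
  move=> w /= /eqP; rewrite neq_lt => /orP[H|H]; [left|right];
    by rewrite /= in_itv /= ?H.
move/negligibleP; apply.
by apply: p0_meas; exact: measurableC (measurable_set1 c).
Qed.
Lemma indic_iff {T1 T2 : Type} (A1 : set T1) (A2 : set T2) x y :
  (A1 x <-> A2 y) -> \1_A1 x = \1_A2 y :> R.
Proof.
move=> H; rewrite !indicE.
have -> : (x \in A1) = (y \in A2).
  by apply/idP/idP; rewrite !inE => /H.
by [].
Qed.

Definition k21 : Idx 2 1 * Idx 2 1 := ((ord0, ord0), (ord_max, ord0)).

Definition BA (A : set R) : set (Cod R 2 1) :=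
  [set P | A (P.1 k21) /\ ~ A (P.2 k21)].

Lemma BA_meas (A : set R) : measurable A -> cod_measurable (BA A).
Proof.
move=> mA.
have -> : BA A = setT `\` \bigcup_i (bigcup2 [set P : Cod R 2 1 | (~` A) (P.1 k21)]
                                         [set P : Cod R 2 1 | A (P.2 k21)]) i.
  rewrite bigcup2E; apply/seteqP; split.
  - by move=> P [H1 H2]; split => // -[]; [apply|].
  - move=> P [_ H]; split.
      by apply: contrapT => H1; apply: H; left.
    by move=> H2; apply: H; right.
apply: sigma_algebraCD; apply: sigma_algebra_bigcup => -[|[|i]] /=.
- apply: sub_sigma_algebra; exists k21, (~` A); split; first exact: measurableC.
  by left.
- apply: sub_sigma_algebra; exists k21, A; split => //.
  by right.
- exact: sigma_algebra0.
Qed.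

Lemma Phi_prod_BA (A : set R) : measurable A ->
  Phi d g 2 1 (mG \x mG)%E (BA A) = (p0 A * p0 (~` A))%E.
Proof.
move=> mA; have mCA : measurable (~` A) by exact: measurableC.
rewrite /Phi /prodn /=.
transitivity (\int[mG \x mG]_z (p0 A * p0 (~` A)))%E.
  apply: eq_integral => z1 _.
  rewrite (eq_integral (fun z2 => (\1_([set w : BG | A (d z1.1 w)] `*`
       [set w : BG | (~` A) (d z1.2 w)]) z2)%:E)); last first.
    move=> z2 _; congr (_%:E); apply: indic_iff.
    by rewrite /dmats /BA /= !mulr0n !addr0.
  have mE : measurable ([set w : BG | A (d z1.1 w)] `*` [set w : BG | (~` A) (d z1.2 w)]).
    by apply: measurableX; exact: dpre_meas.
  rewrite integral_indic //.
  have P := @product_measure1E _ _ _ _ R mG mG _ _ (dpre_meas z1.1 _ mA) (dpre_meas z1.2 _ mCA).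
  rewrite setIT; apply: (eq_trans P).
  by congr (_ * _)%E; apply: haar_d.
have IC := integral_cst (mG \x mG)%E (@measurableT _ (BG * BG)%type) (p0 A * p0 (~` A)).
apply: (eq_trans IC).
have P := @product_measure1E _ _ _ _ R mG mG _ _ (@measurableT _ BG) (@measurableT _ BG).
rewrite setXTT in P.
transitivity (p0 A * p0 (~` A) * 1)%E; last by rewrite mule1.
congr (_ * _)%E; apply: (eq_trans P).
have P1 := probability_setT mG.
by rewrite /= in P1 *; rewrite P1 mule1.
Qed.
Lemma psi_meas (h : G) : measurable_fun setT (fun x : BG => ((x, x + h) : BG * BG)).
Proof.
apply: measurable_fun_pair; first exact: measurable_id.
exact: trans_meas.
Qed.

Lemma Phi_gj_BA (h : G) (A : set R) :
  Phi d g 2 1 (graph_joining mG h) (BA A) = 0%E.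
Proof.
rewrite /Phi /prodn /=.
set psi := (fun x : BG => ((x, x + h) : BG * BG)).
have mpsi : measurable_fun setT psi := psi_meas h.
set F := (fun z1 z2 : BG * BG => ((\1_(dmats d g 2 1 @^-1` BA A) [:: z1; z2])%:E : \bar R)).
have F0 : forall z1 z2, (0 <= F z1 z2)%E by move=> z1 z2; rewrite /F lee_fin.
have Fpsi : forall x1 x2, F (psi x1) (psi x2) = 0%E.
  move=> x1 x2; rewrite /F /psi indicE.
  suff -> : ([:: (x1, x1 + h); (x2, x2 + h)] \in dmats d g 2 1 @^-1` BA A) = false by [].
  apply/negbTE; apply/negP; rewrite in_setE /BA /dmats /= !mulr0n !addr0 d_inv.
  by move=> [].
change (graph_joining mG h) with (pushforward mG psi).
have inner : forall x1, (\int[pushforward mG psi]_z2 F (psi x1) z2 = 0)%E.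
  move=> x1; apply/eqP; rewrite eq_le; apply/andP; split.
    apply: le_trans (le_int_push mG mpsi (F (psi x1)) (F0 _)) _.
    by rewrite (eq_integral (fun _ => 0%E)) ?integral0 // => x2 _; rewrite Fpsi.
  by apply: (@integral_ge0 _ _ _ (pmeas mG mpsi)) => z2 _.
apply/eqP; rewrite eq_le; apply/andP; split.
  apply: le_trans (le_int_push mG mpsi _ _) _.
    by move=> z1; apply: (@integral_ge0 _ _ _ (pmeas mG mpsi)) => z2 _.
  by rewrite (eq_integral (fun _ => 0%E)) ?integral0 // => x1 _; rewrite inner.
apply: (@integral_ge0 _ _ _ (pmeas mG mpsi)) => z1 _.
by apply: (@integral_ge0 _ _ _ (pmeas mG mpsi)) => z2 _.
Qed.

Lemma Phi_eq_01 (h : G) :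
  Phi_eq d g 2 1 (graph_joining mG h) (mG \x mG)%E ->
  forall A, measurable A -> p0 A = 0%E \/ p0 (~` A) = 0%E.
Proof.
move=> HE A mA.
have := HE _ (BA_meas A mA); rewrite Phi_gj_BA Phi_prod_BA // => /esym /eqP.
by rewrite mule_eq0 => /orP[/eqP ->|/eqP ->]; [left|right].
Qed.
Lemma gj_selfjoining (h : G) : selfjoining mG g (graph_joining mG h).
Proof.
have mpsi := psi_meas h.
split.
- rewrite /graph_joining preimage_setT.
  have P1 := probability_setT mG; by rewrite /= in P1 *.
- move=> A mA; rewrite /graph_joining; congr (mG _).
  by apply/seteqP; split => x /=; [case|split].
- move=> A mA; rewrite /graph_joining -(mG_haar h _ mA); congr (mG _).
  by apply/seteqP; split => x /=; [case|split].
- move=> E mE; rewrite /graph_joining.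
  have mE' : measurable ((fun x : BG => ((x, x + h) : BG * BG)) @^-1` E).
    by have := mpsi measurableT E mE; rewrite setTI.
  rewrite -(mG_haar g _ mE'); congr (mG _).
  by apply/seteqP; split => x /=; rewrite addrAC.
Qed.

Lemma Aut_md_trans (t : G) : Aut_md mG d g (fun x => x + t).
Proof.
exists (fun x => x - t).
split; first exact: trans_meas.
split; first exact: trans_meas.
split; first by move=> E mE; exact: mG_haar.
split; first by move=> E mE; exact: mG_haar.
split; first by apply: aeW => x; rewrite addrK.
split; first by apply: aeW => x; rewrite addrNK.
split; first by apply: aeW => x; rewrite addrAC.
by apply: aeW => p; rewrite d_inv.
Qed.

Lemma gj_coord_iso (h h' : G) :
  coord_iso mG d g (graph_joining mG h) (graph_joining mG h').
Proof.
exists (fun x => x + 0), (fun x => x + (h' - h)); split.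
- exact: Aut_md_trans.
- exact: Aut_md_trans.
- move=> E mE; rewrite /graph_joining; congr (mG _).
  apply/seteqP; split => x /=; rewrite addr0 -addrA (addrC h) addrNK //.
Qed.

Lemma phi_meas (t : G) : measurable_fun setT (fun p : BG * BG => ((p.1, p.2 + t) : BG * BG)).
Proof.
apply: measurable_fun_pair; first exact: measurable_fst.
exact: measurableT_comp (trans_meas t) measurable_snd.
Qed.

Lemma Phi_gj_indep (h h' : G) n m B :
  Phi d g n m (graph_joining mG h') B = Phi d g n m (graph_joining mG h) B.
Proof.
rewrite /Phi /prodn.
set t := h' - h.
set phi := (fun p : BG * BG => ((p.1, p.2 + t) : BG * BG)).
set phi' := (fun p : BG * BG => ((p.1, p.2 - t) : BG * BG)).
have E : graph_joining mG h' = pushforward (pmeas mG (psi_meas h)) phi.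
  apply/funext => S; rewrite /graph_joining /pushforward /=; congr (mG _).
  apply/seteqP; split => x /=; rewrite /phi /t /= -addrA (addrC h) addrNK //.
have K1 : cancel phi phi' by move=> [x y]; rewrite /phi /phi' /= addrK.
have K2 : cancel phi' phi by move=> [x y]; rewrite /phi /phi' /= addrNK.
rewrite E (@iprod_push _ _ _ (pmeas mG (psi_meas h)) phi phi' (phi_meas t) (phi_meas (- t)) K1 K2); last first.
  by move=> s; rewrite lee_fin.
apply: iprod_ext => s ss; congr (_%:E); apply: indic_iff.
suff EE : dmats d g n m (map phi s) = dmats d g n m s by rewrite /preimage /= EE.
rewrite /dmats; congr (_, _); apply/funext => ij.
  by rewrite !(nth_map (0, 0)) ?ss //.
rewrite !(nth_map (0, 0)) ?ss //= !(addrAC _ t) d_inv //.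
Qed.
Lemma main_sec :
  (forall h : G, selfjoining mG g (graph_joining mG h)) /\
  (forall h h' : G, coord_iso mG d g (graph_joining mG h) (graph_joining mG h')) /\
  (forall (h h' : G) (n m : nat), (0 < n)%N -> (0 < m)%N ->
     Phi_eq d g n m (graph_joining mG h) (graph_joining mG h')) /\
  (forall h : G,
     ~ (exists c : R, {ae (mG \x mG)%E, forall p : (BorelG G * BorelG G)%type,
          d p.1 p.2 = c}) ->
     ~ Phi_eq d g 2 1 (graph_joining mG h) (mG \x mG)%E).
Proof.
split; first exact: gj_selfjoining.
split; first exact: gj_coord_iso.
split.
  by move=> h h' n m _ _ B _; rewrite (Phi_gj_indep h h').
move=> h Hn HE; apply: Hn.
have [c Hc] := zero_one_const (@Phi_eq_01 h HE).
by exists c; exact: ae_const.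
Qed.

End geo.

Theorem proposition21 (R : realType) (G : topologicalZmodType)
  (G_hausdorff : hausdorff_space G) (G_compact : compact [set: G])
  (d : G -> G -> R) (d_metric : is_metric d) (d_top : induces_topology d)
  (d_inv : forall x y z : G, d (x + z) (y + z) = d x y)
  (mG : probability (BorelG G) R) (mG_haar : haar mG)
  (g : G) (T_ergodic : ergodic mG (fun x : G => x + g)) :
  (forall h : G, selfjoining mG g (graph_joining mG h)) /\
  (forall h h' : G, coord_iso mG d g (graph_joining mG h) (graph_joining mG h')) /\
  (forall (h h' : G) (n m : nat), (0 < n)%N -> (0 < m)%N ->
     Phi_eq d g n m (graph_joining mG h) (graph_joining mG h')) /\
  (forall h : G,
     ~ (exists c : R, {ae (mG \x mG)%E, forall p : (BorelG G * BorelG G)%type,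
          d p.1 p.2 = c}) ->
     ~ Phi_eq d g 2 1 (graph_joining mG h) (mG \x mG)%E).
Proof.
exact: (@main_sec R G d d_metric d_top d_inv G_compact mG mG_haar g).
Qed.
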